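(* Let $G$ be a group equipped with a proper left-invariant metric $d_G$ (bounded sets are finite). Suppose $G$ is locally finite. Then the following are equivalent: (a) $\mathrm{dim}_{AN}(G,d_G)=0$; (b) there is a constant $c>0$ such that for each $r>0$ the subgroup of $G$ generated by the open ball $B(1,r)$ is contained in $B(1,c\cdot r)$.
   Context: A group is locally finite if every finitely generated subgroup is finite. For a metric space $X$, $r>0$: an $r$-path is a sequence $x_0,\dots,x_m$ with $d(x_j,x_{j+1})<r$; two points of $Y\subseteq X$ lie in the same $r$-component of $Y$ if joined by an $r$-path in $Y$. An $n$-dimensional control function of $X$ is $D:\mathbb{R}_+\to\mathbb{R}_+\cup\{\infty\}$ such that for each $r>0$ there is a cover $\{X_0,\dots,X_n\}$ of $X$ such that every open ball $B(x,r)$ lies in some $X_i$ and every $r$-component of each $X_i$ has diameter at most $D(r)$. $\mathrm{dim}_{AN}(X)$ is the smallest $n$ such that $X$ has an $n$-dimensional control function of the form $D(r)=Cr$ for some $C>0$. *)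

(* Defs.v *)
From Stdlib Require Import Reals List.
From Coquelicot Require Import Rbar.
Open Scope R_scope.

Record Group := {
  gcar :> Type;
  gmul : gcar -> gcar -> gcar;
  ginv : gcar -> gcar;
  gone : gcar;
  gmulA : forall x y z, gmul x (gmul y z) = gmul (gmul x y) z;
  gmul1l : forall x, gmul gone x = x;
  gmulVl : forall x, gmul (ginv x) x = gone
}.

Inductive gen (G : Group) (S : G -> Prop) : G -> Prop :=
  | gen_base : forall x, S x -> gen G S x
  | gen_one : gen G S (gone G)
  | gen_mul : forall x y, gen G S x -> gen G S y -> gen G S (gmul G x y)
  | gen_inv : forall x, gen G S x -> gen G S (ginv G x).

Definition finite_set {T : Type} (S : T -> Prop) : Prop :=
  exists l : list T, forall x, S x -> In x l.

Definition locally_finite (G : Group) : Prop :=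
  forall l : list G, finite_set (gen G (fun x => In x l)).

Definition is_metric {X : Type} (d : X -> X -> R) : Prop :=
  (forall x y, 0 <= d x y) /\
  (forall x y, d x y = 0 <-> x = y) /\
  (forall x y, d x y = d y x) /\
  (forall x y z, d x z <= d x y + d y z).

Definition left_invariant (G : Group) (d : G -> G -> R) : Prop :=
  forall g x y, d (gmul G g x) (gmul G g y) = d x y.

Definition proper_metric {X : Type} (d : X -> X -> R) : Prop :=
  forall (S : X -> Prop) (x0 : X) (b : R),
    (forall y, S y -> d x0 y <= b) -> finite_set S.

(** [rchain d Y r x y]: x and y are joined by an r-path lying in Y, i.e.
    they lie in the same r-component of Y. *)
Inductive rchain {X : Type} (d : X -> X -> R) (Y : X -> Prop) (r : R)
  : X -> X -> Prop :=
  | rchain_refl : forall x, Y x -> rchain d Y r x x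
  | rchain_step : forall x z y, Y x -> d x z < r -> rchain d Y r z y ->
      rchain d Y r x y.

(** [D] is an n-dimensional control function of (X,d): for each r > 0 there is
    a cover X_0, ..., X_n such that every open ball B(x,r) lies in some X_i and
    every r-component of each X_i has diameter at most D(r). *)
Definition control_function {X : Type} (d : X -> X -> R) (n : nat)
    (D : R -> Rbar) : Prop :=
  forall r, 0 < r ->
    exists Xs : nat -> X -> Prop,
      (forall x, exists i, (i <= n)%nat /\ Xs i x) /\
      (forall x, exists i, (i <= n)%nat /\ forall y, d x y < r -> Xs i y) /\
      (forall i, (i <= n)%nat -> forall x y, rchain d (Xs i) r x y ->
         Rbar_le (Finite (d x y)) (D r)).

Definition has_linear_control {X : Type} (d : X -> X -> R) (n : nat) : Prop :=
  exists C, 0 < C /\ control_function d n (fun r => Finite (C * r)).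

Definition dim_AN_eq {X : Type} (d : X -> X -> R) (n : nat) : Prop :=
  has_linear_control d n /\ forall m, (m < n)%nat -> ~ has_linear_control d m.

(* Main.v *)
Require Import Defs.
From Stdlib Require Import Reals List Lra Lia.
From Coquelicot Require Import Rbar.
Open Scope R_scope.

Lemma gmulVr (G : Group) (x : G) : gmul G x (ginv G x) = gone G.
Proof.
  assert (Hyy : gmul G (gmul G x (ginv G x)) (gmul G x (ginv G x)) = gmul G x (ginv G x)).
  { rewrite <- gmulA. rewrite (gmulA G (ginv G x) x (ginv G x)).
    rewrite gmulVl, gmul1l. reflexivity. }
  remember (gmul G x (ginv G x)) as y.
  rewrite <- (gmul1l G y). rewrite <- (gmulVl G y) at 1.
  rewrite <- gmulA. rewrite Hyy. apply gmulVl.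
Qed.

Lemma gmul1r (G : Group) (x : G) : gmul G x (gone G) = x.
Proof.
  rewrite <- (gmulVl G x). rewrite gmulA, gmulVr. apply gmul1l.
Qed.

Section Chains.
Variables (G : Group) (d : G -> G -> R) (Y : G -> Prop) (r : R).
Hypothesis hY : forall x, Y x.
Hypothesis hinv : left_invariant G d.
Hypothesis hsym : forall x y, d x y = d y x.

Lemma chain_trans x y z : rchain d Y r x y -> rchain d Y r y z -> rchain d Y r x z.
Proof.
  induction 1; intros; auto. eapply rchain_step; eauto.
Qed.

Lemma chain_transl g x y : rchain d Y r x y -> rchain d Y r (gmul G g x) (gmul G g y).
Proof.
  induction 1. apply rchain_refl; auto.
  eapply rchain_step; eauto. rewrite hinv; auto.
Qed.

Lemma chain_sym x y : rchain d Y r x y -> rchain d Y r y x.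
Proof.
  induction 1. apply rchain_refl; auto.
  eapply chain_trans; eauto. eapply rchain_step with (z := x); auto.
  rewrite hsym; auto. apply rchain_refl; auto.
Qed.

Lemma gen_chain g : gen G (fun x => d (gone G) x < r) g -> rchain d Y r (gone G) g.
Proof.
  induction 1.
  - eapply rchain_step; eauto. apply rchain_refl; auto.
  - apply rchain_refl; auto.
  - apply chain_trans with (y := x); auto.
    rewrite <- (gmul1r G x) at 1. apply chain_transl; auto.
  - apply chain_sym. rewrite <- (gmulVl G x). rewrite <- (gmul1r G (ginv G x)) at 1.
    apply chain_transl; auto.
Qed.

Lemma chain_gen x y : rchain d Y r x y ->
  gen G (fun x => d (gone G) x < r) (gmul G (ginv G x) y).
Proof.
  induction 1.
  - rewrite gmulVl. apply gen_one.
  - replace (gmul G (ginv G x) y) with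
      (gmul G (gmul G (ginv G x) z) (gmul G (ginv G z) y)).
    + apply gen_mul; auto. apply gen_base.
      rewrite <- (hinv x). rewrite gmul1r, gmulA, gmulVr, gmul1l. auto.
    + rewrite <- gmulA. rewrite (gmulA G z), gmulVr, gmul1l. reflexivity.
Qed.
End Chains.

Theorem proposition2p1 (G : Group) (d : G -> G -> R)
  (hmetric : is_metric d) (hinv : left_invariant G d) (hprop : proper_metric d)
  (hlf : locally_finite G) :
  dim_AN_eq d 0 <->
  exists c, 0 < c /\
    forall r, 0 < r ->
      forall g, gen G (fun x => d (gone G) x < r) g -> d (gone G) g < c * r.
Proof.
  destruct hmetric as [hpos [hzero [hsym htri]]].
  split.
  - intros [[C [HC Hctl]] _].
    exists (2 * C). split; [lra|].
    intros r Hr g Hg.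
    destruct (Hctl r Hr) as [Xs [_ [Hball Hdiam]]].
    assert (HY : forall x, Xs 0%nat x).
    { intros x. destruct (Hball x) as [i [Hi Hx]].
      assert (i = 0%nat) by lia. subst i. apply Hx.
      rewrite (proj2 (hzero x x) eq_refl). exact Hr. }
    pose proof (Hdiam 0%nat (le_n 0) _ _ (gen_chain G d (Xs 0%nat) r HY hinv hsym g Hg)) as H.
    simpl in H. nra.
  - intros [c [Hc Hgen]]. split.
    + exists c. split; auto. intros r Hr.
      exists (fun _ _ => True). split; [intros; exists 0%nat; auto|].
      split; [intros; exists 0%nat; auto|].
      intros i _ x y Hxy. simpl.
      pose proof (chain_gen G d _ r hinv _ _ Hxy) as H.
      apply Hgen in H; auto.
      rewrite <- (hinv x), gmul1r, gmulA, gmulVr, gmul1l in H. lra.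
    + intros m Hm. lia.
Qed.
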